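(* Let $n\ge2$, let $V$ be a finite-dimensional complex vector space and let $\rho\colon P_{n+1}\to\mathrm{GL}(V)$ be a representation, where $P_{n+1}$ is identified with $F_n\rtimes P_n$ as described in the context. Fix $t_1,\dots,t_n\in\mathbf{C}^*$. Then (i) there is a representation $\rho_{t_1,\dots,t_n}\colon P_{n+1}\to\mathrm{GL}(V)$ with $\rho_{t_1,\dots,t_n}(g_i)=t_i\rho(g_i)$ for $i=1,\dots,n$ and $\rho_{t_1,\dots,t_n}(\beta)=\rho(\beta)$ for all $\beta\in P_n$; and (ii) for every $\beta\in P_n$ all entries of $\phi(\beta)$ lie in $\mathbf{Z}[F_n\rtimes P_n]$, and the map $\rho^+_{t_1,\dots,t_n}\colon P_n\to\mathrm{GL}(V^{\oplus n})$ sending $\beta$ to the block matrix whose $(k,l)$ block is $\rho_{t_1,\dots,t_n}(\phi(\beta)_{kl})$ (with $\rho_{t_1,\dots,t_n}$ extended linearly to the group ring) is a representation of $P_n$. This gives an $n$-parameter family of representations of $P_n$ on $V^{\oplus n}$.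
   Context: The braid group $B_n$ has generators $\sigma_1,\dots,\sigma_{n-1}$ with relations $\sigma_i\sigma_j=\sigma_j\sigma_i$ for $|i-j|>1$ and $\sigma_i\sigma_j\sigma_i=\sigma_j\sigma_i\sigma_j$ for $|i-j|=1$; $P_n\subset B_n$ is the pure braid group. Let $F_n$ be the free group on $g_1,\dots,g_n$. The semidirect product $F_n\rtimes B_n$ is the group generated by $F_n$ and $B_n$ subject to the additional relations $g_{i+1}\sigma_i=\sigma_i g_i$, $g_i\sigma_i=\sigma_i g_i g_{i+1}g_i^{-1}$, and $g_j\sigma_i=\sigma_i g_j$ for $j\notin\{i,i+1\}$; $F_n\rtimes P_n$ denotes its subgroup generated by $F_n$ and $P_n$. For $i=1,\dots,n-1$ let $R_i=\begin{bmatrix}0&g_i\\1&1-g_i\end{bmatrix}$, and let $\phi$ be the homomorphism from $B_n$ to the invertible $n\times n$ matrices over the group ring $\mathbf{Z}[F_n\rtimes B_n]$ given by $\phi(\sigma_i)=\sigma_i\cdot\mathrm{diag}(I_{i-1},R_i,I_{n-i-1})$ (the scalar $\sigma_i$ multiplies each entry on the left). The pure braid group $P_{n+1}$ is identified with $F_n\rtimes P_n$: $P_n\subset P_{n+1}$ as pure braids on the first $n$ strands, and $F_n$ corresponds to the subgroup of $P_{n+1}$ of braids whose first $n$ strands are straight, freely generated by $g_i=(\sigma_n\cdots\sigma_{i+1})\sigma_i^2(\sigma_n\cdots\sigma_{i+1})^{-1}$, $i=1,\dots,n$. *)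

(* Defs.v *)
From HB Require Import structures.
From mathcomp Require Import all_boot all_order all_algebra.
From mathcomp Require Import boolp reals complex.
Unset Implicit Arguments.
Import Order.TTheory GRing.Theory Num.Theory.

(* Letters of words in the generators of F_n ⋊ B_n (1-based indices as in
   the paper).  [Sg i b] is sigma_i (b = false) or sigma_i^{-1} (b = true);
   [Gn i b] is g_i or g_i^{-1}. *)
Inductive letter := Sg of nat & bool | Gn of nat & bool.
Definition word := seq letter.

Definition linv (x : letter) : letter :=
  match x with Sg i b => Sg i (~~ b) | Gn i b => Gn i (~~ b) end.

Definition is_sigma (x : letter) : bool := if x is Sg _ _ then true else false.

Definition wf_letter (n : nat) (x : letter) : bool :=
  match x with Sg i _ => (1 <= i <= n.-1)%N | Gn i _ => (1 <= i <= n)%N end.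
Definition wf (n : nat) (w : word) : bool := all (wf_letter n) w.
Definition braid_word (n : nat) (w : word) : bool :=
  wf n w && all is_sigma w.

Definition swap (i k : nat) : nat :=
  if k == i then i.+1 else if k == i.+1 then i else k.
Definition perm_of (w : word) (k : nat) : nat :=
  foldr (fun x k => match x with Sg i _ => swap i k | Gn _ _ => k end) k w.
(* the word represents an element of F_n ⋊ P_n (resp. of P_n for braid words) *)
Definition pure (n : nat) (w : word) : bool :=
  all (fun k => perm_of w k == k) (iota 1 n).

Notation s_ i := (Sg i false).
Notation g_ i := (Gn i false).
Notation ginv_ i := (Gn i true).

Inductive braid_rel (n : nat) : word -> word -> Prop :=
| br_far i j : (1 <= i <= n.-1)%N -> (1 <= j <= n.-1)%N ->
    ((i.+1 < j) || (j.+1 < i))%N -> braid_rel n [:: s_ i; s_ j] [:: s_ j; s_ i]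
| br_adj i j : (1 <= i <= n.-1)%N -> (1 <= j <= n.-1)%N ->
    ((j == i.+1) || (i == j.+1)) ->
    braid_rel n [:: s_ i; s_ j; s_ i] [:: s_ j; s_ i; s_ j].

Inductive sd_rel (n : nat) : word -> word -> Prop :=
| sd_braid u v : braid_rel n u v -> sd_rel n u v
| sd_1 i : (1 <= i <= n.-1)%N -> sd_rel n [:: g_ i.+1; s_ i] [:: s_ i; g_ i]
| sd_2 i : (1 <= i <= n.-1)%N ->
    sd_rel n [:: g_ i; s_ i] [:: s_ i; g_ i; g_ i.+1; ginv_ i]
| sd_3 i j : (1 <= i <= n.-1)%N -> (1 <= j <= n)%N -> j != i -> j != i.+1 ->
    sd_rel n [:: g_ j; s_ i] [:: s_ i; g_ j].

(* the congruence on words generated by free cancellation of allowed letters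
   and the relations R: u ~ v iff u and v represent the same group element *)
Inductive cong (ok : letter -> bool) (R : word -> word -> Prop) :
  word -> word -> Prop :=
| cg_refl u : cong ok R u u
| cg_sym u v : cong ok R u v -> cong ok R v u
| cg_trans u v w : cong ok R u v -> cong ok R v w -> cong ok R u w
| cg_rel a b u v : R u v -> cong ok R (a ++ u ++ b) (a ++ v ++ b)
| cg_free a b x : ok x -> cong ok R (a ++ [:: x; linv x] ++ b) (a ++ b).

Definition eqG (n : nat) := cong (wf_letter n) (sd_rel n).
Definition eqB (n : nat) := cong (fun x => wf_letter n x && is_sigma x) (braid_rel n).

(* A representation of F_n ⋊ P_n (= P_{n+1}) on V = C^d, given on words. *)
Definition is_rep_FP (C : nzRingType) (n d : nat) (f : word -> 'M[C]_d) : Prop :=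
  f [::] = (1%:M)%R /\
  (forall u v, wf n u -> wf n v -> pure n u -> pure n v ->
      f (u ++ v) = (f u *m f v)%R) /\
  (forall u v, wf n u -> wf n v -> pure n u -> pure n v ->
      eqG n u v -> f u = f v).

Definition is_rep_P (C : nzRingType) (n m : nat) (f : word -> 'M[C]_m) : Prop :=
  f [::] = (1%:M)%R /\
  (forall u v, braid_word n u -> braid_word n v -> pure n u -> pure n v ->
      f (u ++ v) = (f u *m f v)%R) /\
  (forall u v, braid_word n u -> braid_word n v -> pure n u -> pure n v ->
      eqB n u v -> f u = f v).

(* Elements of the group ring Z[F_n ⋊ B_n]: formal Z-combinations of words. *)
Definition gr := seq (int * word).
Definition gmul (x y : gr) : gr :=
  [seq ((p.1 * q.1)%R, p.2 ++ q.2) | p <- x, q <- y].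
(* n x n matrices over the group ring, indices 0-based *)
Definition gmat (n : nat) := 'I_n -> 'I_n -> gr.
Definition gone (n : nat) : gmat n :=
  fun k l => if k == l then [:: (1%R, [::])] else [::].
Definition gmm (n : nat) (A B : gmat n) : gmat n :=
  fun k l => flatten [seq gmul (A k m) (B m l) | m <- enum 'I_n].

(* diag(I_{i-1}, R_i, I_{n-i-1}) (inv = false) and its inverse (inv = true),
   R_i = [[0, g_i], [1, 1 - g_i]],  R_i^{-1} = [[1 - g_i^{-1}, 1], [g_i^{-1}, 0]] *)
Definition Dmat (n i : nat) (inv : bool) : gmat n :=
  fun k l =>
    let k' := k.+1 in let l' := l.+1 in
    if (k' \in [:: i; i.+1]) && (l' \in [:: i; i.+1]) then
      if ~~ inv then
        if (k' == i) && (l' == i) then [::]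
        else if (k' == i) then [:: (1%R, [:: g_ i])]
        else if (l' == i) then [:: (1%R, [::])]
        else [:: (1%R, [::]); ((-1)%R, [:: g_ i])]
      else
        if (k' == i) && (l' == i) then [:: (1%R, [::]); ((-1)%R, [:: ginv_ i])]
        else if (k' == i) then [:: (1%R, [::])]
        else if (l' == i) then [:: (1%R, [:: ginv_ i])]
        else [::]
    else gone n k l.

(* phi(sigma_i) = sigma_i . D_i,  phi(sigma_i^{-1}) = phi(sigma_i)^{-1} = D_i^{-1} . sigma_i^{-1} *)
Definition phi_letter (n : nat) (x : letter) : gmat n :=
  match x with
  | Sg i false => fun k l => [seq (p.1, s_ i :: p.2) | p <- Dmat n i false k l]
  | Sg i true => fun k l => [seq (p.1, p.2 ++ [:: Sg i true]) | p <- Dmat n i true k l]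
  | Gn _ _ => gone n
  end.
Definition phi (n : nat) (w : word) : gmat n :=
  foldr (fun x M => gmm n (phi_letter n x) M) (gone n) w.

(* x lies in Z[F_n ⋊ P_n]: its coefficient on every group element outside
   F_n ⋊ P_n vanishes *)
Definition in_ZFP (n : nat) (x : gr) : Prop :=
  forall u, wf n u -> ~~ pure n u ->
    (\sum_(p <- x | `[< eqG n p.2 u >]) p.1)%R = 0%R.

Definition ext (C : nzRingType) (n d : nat) (f : word -> 'M[C]_d) (x : gr) : 'M[C]_d :=
  (\sum_(p <- x | pure n p.2) p.1%:~R *: f p.2)%R.

Definition rho_plus (C : nzRingType) (n d : nat) (rho_t : word -> 'M[C]_d) (b : word)
  : 'M[C]_(\sum_(k < n) d) :=
  @mxblock C n n (fun _ => d) (fun _ => d) (fun k l => ext C n d rho_t (phi n b k l)).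

Definition twisted (C : nzRingType) (n d : nat) (rho : word -> 'M[C]_d) (t : nat -> C)
  (rho_t : word -> 'M[C]_d) : Prop :=
  is_rep_FP C n d rho_t /\
  (forall i, (1 <= i <= n)%N -> rho_t [:: g_ i] = (t i *: rho [:: g_ i])%R) /\
  (forall b, braid_word n b -> pure n b -> rho_t b = rho b).

Arguments is_rep_FP {C} n d f.
Arguments is_rep_P {C} n m f.
Arguments ext {C} n d f x.
Arguments rho_plus {C} n d rho_t b.
Arguments twisted {C} n d rho t rho_t.

(* Main.v *)
Require Import Defs.
From HB Require Import structures.
From mathcomp Require Import all_boot all_order all_algebra.
From mathcomp Require Import boolp reals complex.
From mathcomp Require Import zify ring.
Import Order.TTheory GRing.Theory Num.Theory.
Set Implicit Arguments. Unset Strict Implicit. Unset Printing Implicit Defensive.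

Definition eqletter (x y : letter) : bool :=
  match x, y with
  | Sg i b, Sg j c => (i == j) && (b == c)
  | Gn i b, Gn j c => (i == j) && (b == c)
  | _, _ => false
  end.
Lemma eqletterP : Equality.axiom eqletter.
Proof.
case=> [i b|i b] [j c|j c] /=; try by constructor.
- by apply: (iffP andP) => [[/eqP-> /eqP->]|[-> ->]].
- by apply: (iffP andP) => [[/eqP-> /eqP->]|[-> ->]].
Qed.
HB.instance Definition _ := hasDecEq.Build letter eqletterP.

Section Cong.
Variables (ok : letter -> bool) (R : word -> word -> Prop).

Lemma cong_ctx a b u v : cong ok R u v -> cong ok R (a ++ u ++ b) (a ++ v ++ b).
Proof.
elim=> {u v}.
- by move=> u; apply: cg_refl.
- by move=> u v _ IH; apply: cg_sym.
- by move=> u v w _ IH1 _ IH2; apply: cg_trans IH2.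
- move=> a' b' u v H.
  have -> : a ++ (a' ++ u ++ b') ++ b = (a ++ a') ++ u ++ (b' ++ b) by rewrite !catA.
  have -> : a ++ (a' ++ v ++ b') ++ b = (a ++ a') ++ v ++ (b' ++ b) by rewrite !catA.
  exact: cg_rel.
- move=> a' b' x H.
  have -> : a ++ (a' ++ [:: x; linv x] ++ b') ++ b = (a ++ a') ++ [:: x; linv x] ++ (b' ++ b) by rewrite !catA.
  have -> : a ++ (a' ++ b') ++ b = (a ++ a') ++ (b' ++ b) by rewrite !catA.
  exact: cg_free.
Qed.

Lemma cong_l a u v : cong ok R u v -> cong ok R (a ++ u) (a ++ v).
Proof. by move=> /(cong_ctx a [::]); rewrite !cats0. Qed.
Lemma cong_r b u v : cong ok R u v -> cong ok R (u ++ b) (v ++ b).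
Proof. by move=> /(cong_ctx [::] b). Qed.

End Cong.

Lemma perm_of_cat u v k : perm_of (u ++ v) k = perm_of u (perm_of v k).
Proof. by rewrite /perm_of foldr_cat. Qed.

Ltac noeq t := match t with context[_ == _] => fail 1 | _ => idtac end.
Ltac sw := rewrite /swap; repeat (match goal with |- context[?x == ?y] => noeq x; noeq y; case: (x =P y) => ? end; simpl); lia.
Lemma swapK i k : swap i (swap i k) = k.
Proof. sw. Qed.
Lemma swap_far i j k : (i.+1 < j)%N || (j.+1 < i)%N -> swap i (swap j k) = swap j (swap i k).
Proof. move=> h; sw. Qed.
Lemma swap_adj i j k : (j == i.+1) || (i == j.+1) ->
  swap i (swap j (swap i k)) = swap j (swap i (swap j k)).
Proof. move=> h; sw. Qed.

Lemma cong_perm (ok : letter -> bool) (R : word -> word -> Prop) :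
  (forall u v, R u v -> forall k, perm_of u k = perm_of v k) ->
  forall u v, cong ok R u v -> forall k, perm_of u k = perm_of v k.
Proof.
intros hR u0 v0 H; induction H; intro k.
- by [].
- by rewrite IHcong.
- by rewrite IHcong1 IHcong2.
- by rewrite !perm_of_cat (hR _ _ H).
- by destruct x; rewrite !perm_of_cat /= ?swapK.
Qed.

Lemma sd_perm n u v : sd_rel n u v -> forall k, perm_of u k = perm_of v k.
Proof.
case.
- move=> u0 v0 []; clear u0 v0.
  + by move=> i j _ _ h k /=; rewrite swap_far.
  + by move=> i j _ _ h k /=; rewrite swap_adj.
- by [].
- by [].
- by [].
Qed.

Lemma eqG_perm n u v : eqG n u v -> forall k, perm_of u k = perm_of v k.
Proof. apply: cong_perm; exact: sd_perm. Qed.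

Lemma braid_perm n u v : braid_rel n u v -> forall k, perm_of u k = perm_of v k.
Proof. move=> h; exact: (sd_perm (sd_braid _ _ _ h)). Qed.

Lemma eqB_perm n u v : eqB n u v -> forall k, perm_of u k = perm_of v k.
Proof. apply: cong_perm; exact: braid_perm. Qed.

Lemma wf_cat n u v : wf n (u ++ v) = wf n u && wf n v.
Proof. by rewrite /wf all_cat. Qed.

Lemma cong_wf n (ok : letter -> bool) (R : word -> word -> Prop) :
  (forall x, ok x -> wf_letter n x) ->
  (forall u v, R u v -> wf n u /\ wf n v) ->
  forall u v, cong ok R u v -> wf n u = wf n v.
Proof.
intros hok hR u0 v0 H; induction H.
- by [].
- by rewrite IHcong.
- by rewrite IHcong1 IHcong2.
- by case: (hR _ _ H) => hu hv; rewrite !wf_cat hu hv.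
- rewrite !wf_cat /= (hok _ H).
  suff -> : wf_letter n (linv x) by [].
  by case: x H (hok _ H).
Qed.

Lemma sd_wf n u v : sd_rel n u v -> wf n u /\ wf n v.
Proof.
case.
- move=> u0 v0 []; clear u0 v0 => i j /= hi hj _; rewrite hi hj; by [].
- move=> i hi /=; rewrite hi /=; split; lia.
- move=> i hi /=; rewrite hi /=; split; lia.
- move=> i j hi hj _ _ /=; rewrite hi hj; by [].
Qed.

Lemma eqG_wf n u v : eqG n u v -> wf n u = wf n v.
Proof. apply: cong_wf => //; exact: sd_wf. Qed.

Lemma eqB_wf n u v : eqB n u v -> wf n u = wf n v.
Proof.
apply: cong_wf; first by move=> x /andP[].
by move=> u0 v0 h; exact: (sd_wf (sd_braid _ _ _ h)).
Qed.

Lemma wf_perm_out n u k : wf n u -> ~~ (1 <= k <= n)%N -> perm_of u k = k.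
Proof.
elim: u => // [[i b|i b]] u IH /= /andP[hx hu] hk; rewrite IH //.
rewrite /swap; case: eqP => [?|]; first lia.
case: eqP => // ?; lia.
Qed.

Lemma pure_perm n u : wf n u -> pure n u -> forall k, perm_of u k = k.
Proof.
move=> hw /allP hp k.
case hk : (1 <= k <= n)%N.
- by apply/eqP/hp; rewrite mem_iota; lia.
- by rewrite (wf_perm_out hw) // hk.
Qed.

Lemma pure_ext n u v : (forall k, perm_of u k = perm_of v k) -> pure n u = pure n v.
Proof. by move=> h; apply: eq_all => k; rewrite h. Qed.

Section Chi.
Local Open Scope ring_scope.
Variables (C : fieldType) (n : nat) (t : nat -> C).
Hypothesis tnz : forall i, (1 <= i <= n)%N -> t i != 0.

Definition tt (k : nat) : C := if (1 <= k <= n)%N then t k else 1.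
Lemma tt_nz k : tt k != 0.
Proof. by rewrite /tt; case: ifP => [/tnz|]; rewrite ?oner_eq0. Qed.

Definition tpow (b : bool) (x : C) := if b then x^-1 else x.

Fixpoint chiP (pi : nat -> nat) (w : word) : C :=
  match w with
  | [::] => 1
  | Sg i _ :: w => chiP (fun k => pi (swap i k)) w
  | Gn j b :: w => tpow b (tt (pi j)) * chiP pi w
  end.

Lemma chiP_ext w pi pi' : (forall k, pi k = pi' k) -> chiP pi w = chiP pi' w.
Proof.
elim: w pi pi' => //= [[i b|j b]] w IH pi pi' h.
- by apply: IH => k; rewrite h.
- by rewrite h (IH pi pi').
Qed.

Lemma chiP_cat u v pi :
  chiP pi (u ++ v) = chiP pi u * chiP (fun k => pi (perm_of u k)) v.
Proof.
elim: u pi => /= [|[i b|j b] u IH] pi.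
- by rewrite mul1r; apply: chiP_ext.
- by rewrite IH.
- by rewrite IH mulrA.
Qed.

Lemma sd_chi u v : sd_rel n u v -> forall pi, chiP pi u = chiP pi v.
Proof.
case.
- by move=> u0 v0 [].
- move=> i hi pi /=; rewrite /swap eqxx.
  by [].
- move=> i hi pi /=; rewrite /swap eqxx /= ifN; last by rewrite eqn_leq ltnn.
  by rewrite eqxx !mulr1 mulrCA mulfV ?mulr1 ?tt_nz.
- move=> i j hi hj h1 h2 pi /=; rewrite /swap (negbTE h1) (negbTE h2) //.
Qed.

Lemma eqG_chi u v : eqG n u v -> forall pi, chiP pi u = chiP pi v.
Proof.
intros H; induction H; intro pi.
- by [].
- by rewrite IHcong.
- by rewrite IHcong1 IHcong2.
- rewrite !chiP_cat (sd_chi H); do 2 congr (_ * _); apply: chiP_ext => k.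
  by rewrite (sd_perm H).
- rewrite !chiP_cat; congr (_ * _).
  case: x H => [i c|j c] H /=.
  + by rewrite mul1r; apply: chiP_ext => k; rewrite swapK.
  + rewrite mulr1 /tpow; case: c H => H; rewrite ?mulVf ?mulfV ?mul1r ?tt_nz //.
Qed.

Lemma chiP_braid w pi : all is_sigma w -> chiP pi w = 1.
Proof. by elim: w pi => //= [[i b|j b]] w IH pi //= /IH. Qed.

End Chi.

Lemma mem_gone n (k l : 'I_n) p : p \in gone n k l -> p = (1%R, [::]).
Proof. by rewrite /gone; case: eqP => // _; rewrite inE => /eqP. Qed.

Lemma mem_Dmat n i b (k l : 'I_n) p : p \in Dmat n i b k l -> p.2 = [::] \/ p.2 = [:: Gn i b].
Proof.
rewrite /Dmat; case: ifP => _; last by move/mem_gone->; left.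
case: b => /=; repeat case: ifP => _; rewrite ?inE //;
  by repeat (case/orP || move/eqP ->); auto.
Qed.

Lemma mem_gmm n (A B : gmat n) k l p : p \in gmm n A B k l ->
  exists m q r, [/\ q \in A k m, r \in B m l & p = (q.1 * r.1, q.2 ++ r.2)%R].
Proof.
case/flattenP => s /mapP[m _ ->] /allpairsP[[q r] /= [hq hr ->]].
by exists m, q, r.
Qed.

Lemma phi_words n w (k l : 'I_n) p : p \in phi n w k l ->
  (forall j, perm_of p.2 j = perm_of w j) /\ (wf n w -> wf n p.2).
Proof.
elim: w k l p => [|x w IH] k l p /=.
- by move/mem_gone ->.
- case/mem_gmm => m [q [r [hq hr ->]]] /=.
  case: (IH _ _ _ hr) => hp hw.
  have [hq1 hq2] : (forall j, perm_of q.2 j = perm_of [:: x] j) /\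
                   (wf_letter n x -> wf n q.2).
    case: x hq => [i [|]|i b] /=.
    - case/mapP => q' /mem_Dmat hd -> /=; case: hd => ->; split=> // h;
        rewrite /wf /= ?h ?andbT //; lia.
    - case/mapP => q' /mem_Dmat hd -> /=; case: hd => ->; split=> // h;
        rewrite /wf /= ?h ?andbT //; lia.
    - by move/mem_gone ->.
  split.
  + by move=> j; rewrite perm_of_cat hp hq1.
  + by move=> /andP[hx /hw hr2]; rewrite wf_cat hr2 andbT hq2.
Qed.

Lemma partii n b (k l : 'I_n) : pure n b -> in_ZFP n (phi n b k l).
Proof.
move=> hb u hu hnp; rewrite big_seq_cond big1 // => p /andP[hp /asboolP he].
case/negP: hnp; rewrite -(pure_ext n (eqG_perm he)).
case: (phi_words hp) => hperm _; by rewrite (pure_ext n hperm).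
Qed.

Section Parti.
Local Open Scope ring_scope.
Variables (C : fieldType) (n d : nat) (rho : word -> 'M[C]_d) (t : nat -> C).
Hypothesis tnz : forall i, (1 <= i <= n)%N -> t i != 0.
Hypothesis hrho : is_rep_FP n d rho.

Definition rhot (w : word) : 'M[C]_d := chiP n t (fun k => k) w *: rho w.

Lemma rhot_twisted : twisted n d rho t rhot.
Proof.
case: hrho => [h1 [hm hc]].
split; [split; [|split]|split].
- by rewrite /rhot /= scale1r h1.
- move=> u v hu hv pu pv; rewrite /rhot chiP_cat hm //.
  rewrite (@chiP_ext _ _ _ _ _ (fun k => k)); last by move=> k; rewrite (pure_perm hu pu).
  by rewrite mulrC -scalerA scalemxAl scalemxAr.
- move=> u v hu hv pu pv he; rewrite /rhot (eqG_chi tnz he) (hc u v) //.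
- move=> i hi; rewrite /rhot /= mulr1 /tpow /tt hi //.
- move=> b /andP[_ hb] _; rewrite /rhot chiP_braid // scale1r //.
Qed.
End Parti.

Section Blk.
Variables (n i : nat) (a b : 'I_n).
Hypotheses (ha : val a = i.-1) (hb : val b = i) (i0 : (0 < i)%N).

Lemma ea (x : 'I_n) : (x.+1 == i) = (x == a).
Proof. rewrite -val_eqE /= ha; apply/eqP/eqP; lia. Qed.
Lemma eb (x : 'I_n) : (x.+1 == i.+1) = (x == b).
Proof. rewrite -val_eqE /= hb; apply/eqP/eqP; lia. Qed.
Lemma nab : (a == b) = false.
Proof. apply/negbTE; rewrite -val_eqE /= ha hb; apply/eqP; lia. Qed.
Lemma nba : (b == a) = false.
Proof. by rewrite eq_sym nab. Qed.

Lemma Dmat_f (k m : 'I_n) : Dmat n i false k m =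
  if k == a then (if m == b then [:: (1%R, [:: g_ i])] else [::])
  else if k == b then (if m == a then [:: (1%R, [::])]
       else if m == b then [:: (1%R, [::]); ((-1)%R, [:: g_ i])] else [::])
  else gone n k m.
Proof.
rewrite /Dmat /= !inE !ea !eb.
case: (eqVneq k a) => [->|ka]; [|case: (eqVneq k b) => [->|kb]];
  case: (eqVneq m a) => [->|ma]; try (case: (eqVneq m b) => [->|mb]);
  rewrite ?nab ?nba ?eqxx //= /gone.
- by rewrite eq_sym (negbTE ma).
- by rewrite eq_sym (negbTE mb).
Qed.


Lemma Dmat_t (k m : 'I_n) : Dmat n i true k m =
  if k == a then (if m == a then [:: (1%R, [::]); ((-1)%R, [:: ginv_ i])]
       else if m == b then [:: (1%R, [::])] else [::])
  else if k == b then (if m == a then [:: (1%R, [:: ginv_ i])] else [::])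
  else gone n k m.
Proof.
rewrite /Dmat /= !inE !ea !eb.
case: (eqVneq k a) => [->|ka]; [|case: (eqVneq k b) => [->|kb]];
  case: (eqVneq m a) => [->|ma]; try (case: (eqVneq m b) => [->|mb]);
  rewrite ?nab ?nba ?eqxx //= /gone.
- by rewrite eq_sym (negbTE ma).
- by rewrite eq_sym (negbTE mb).
Qed.
End Blk.

Local Open Scope ring_scope.

Section SF.
Variable (T : zmodType).
Definition Sv (F : word -> T) (x : gr) : T := \sum_(p <- x) F p.2 *~ p.1.

Lemma S_nil F : Sv F [::] = 0. Proof. by rewrite /Sv big_nil. Qed.
Lemma S_cons F p x : Sv F (p :: x) = F p.2 *~ p.1 + Sv F x.
Proof. by rewrite /Sv big_cons. Qed.
Lemma S_cat F x y : Sv F (x ++ y) = Sv F x + Sv F y.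
Proof. by rewrite /Sv big_cat. Qed.
Lemma S_ext F G x : (forall w, F w = G w) -> Sv F x = Sv G x.
Proof. by move=> h; apply: eq_bigr => p _; rewrite h. Qed.
Lemma S_map F f x : Sv F [seq (p.1, f p.2) | p <- x] = Sv (fun w => F (f w)) x.
Proof. by rewrite /Sv big_map. Qed.
Lemma S_1 F w : Sv F [:: (1, w)] = F w.
Proof. by rewrite S_cons S_nil addr0 mulr1z. Qed.
Lemma S_2 F w w' : Sv F [:: (1, w); (-1, w')] = F w - F w'.
Proof. by rewrite !S_cons S_nil addr0 mulr1z mulrN1z. Qed.

Lemma S_gmul F x y : Sv F (gmul x y) = Sv (fun w => Sv (fun w' => F (w ++ w')) y) x.
Proof.
elim: x => [|p x IH]; first by rewrite /gmul /= !S_nil.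
rewrite /gmul /= S_cat -/(gmul x y) IH S_cons; congr (_ + _).
rewrite /Sv big_map mulrz_suml; apply: eq_bigr => q _ /=.
by rewrite mulrzA mulrzAC.
Qed.

Lemma S_sum (I : Type) (r : seq I) (G : I -> word -> T) x :
  Sv (fun w => \sum_(m <- r) G m w) x = \sum_(m <- r) Sv (G m) x.
Proof.
rewrite /Sv (exchange_big_dep xpredT) //=; apply: eq_bigr => p _.
by rewrite mulrz_suml.
Qed.

Lemma S_gmm n (A B : gmat n) F k l :
  Sv F (gmm n A B k l) = \sum_(m < n) Sv (fun w => Sv (fun w' => F (w ++ w')) (B m l)) (A k m).
Proof.
rewrite /gmm /Sv big_flatten /= big_map big_enum /=; apply: eq_bigr => m _.
exact: S_gmul.
Qed.

Lemma sum_if1 n (c : 'I_n) (X : 'I_n -> T) :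
  \sum_(m < n) (if m == c then X m else 0) = X c.
Proof.
rewrite (bigD1 c) //= eqxx big1 ?addr0 // => m /negbTE -> //.
Qed.

Lemma S_gone n F (k l : 'I_n) : Sv F (gone n k l) = if k == l then F [::] else 0.
Proof. by rewrite /gone; case: eqP => _; rewrite ?S_1 ?S_nil. Qed.

Lemma phi_cat n F a w k l :
  Sv F (phi n (a ++ w) k l) =
  \sum_(m < n) Sv (fun u => Sv (fun v => F (u ++ v)) (phi n w m l)) (phi n a k m).
Proof.
elim: a F k l => [|x a IH] F k l.
- under eq_bigr do rewrite S_gone.
  by rewrite /= (eq_bigr (fun m => if m == k then Sv F (phi n w m l) else 0))
       ?sum_if1 // => m _; rewrite eq_sym.
- rewrite /= S_gmm.
transitivity (\sum_(m < n) \sum_(m' < n) Sv (fun u => Sv (fun v => Sv (fun v' => F (u ++ (v ++ v')))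
     (phi n w m' l)) (phi n a m m')) (phi_letter n x k m)).
    by apply: eq_bigr => m _; rewrite -S_sum; apply: S_ext => u; exact: IH.
  rewrite exchange_big /=; apply: eq_bigr => m' _.
  rewrite S_gmm; apply: eq_bigr => m _; apply: S_ext => u; apply: S_ext => v.
  by apply: S_ext => v'; rewrite catA.
Qed.
End SF.

Local Open Scope ring_scope.

Section Rows.
Variables (T : zmodType) (n i : nat) (a b : 'I_n).
Hypotheses (ha : val a = i.-1) (hb : val b = i) (i0 : (0 < i)%N).

Lemma sum_if2 (X Y : 'I_n -> T) :
  \sum_(m < n) (if m == a then X m else if m == b then Y m else 0) = X a + Y b.
Proof.
rewrite (bigD1 a) //= eqxx (bigD1 b) /=; last by rewrite eq_sym (nab ha hb i0).
rewrite (nba ha hb i0) eqxx big1 ?addr0 // => m /andP[/negbTE -> /negbTE ->] //.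
Qed.

Lemma sum_if1' (c : 'I_n) (X : 'I_n -> T) :
  \sum_(m < n) (if c == m then X m else 0) = X c.
Proof.
by rewrite -(sum_if1 c X); apply: eq_bigr => m _; rewrite eq_sym.
Qed.

Lemma S_if (F : word -> T) (c : bool) x y : Sv F (if c then x else y) = if c then Sv F x else Sv F y.
Proof. by case: c. Qed.

Lemma rowS (F : word -> T) (B : gmat n) k l :
  Sv F (gmm n (phi_letter n (s_ i)) B k l) =
  if k == a then Sv (fun w => F (s_ i :: g_ i :: w)) (B b l)
  else if k == b then Sv (fun w => F (s_ i :: w)) (B a l) + Sv (fun w => F (s_ i :: w)) (B b l)
                      - Sv (fun w => F (s_ i :: g_ i :: w)) (B b l)
  else Sv (fun w => F (s_ i :: w)) (B k l).
Proof.
rewrite S_gmm /=.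
under eq_bigr => m _ do rewrite (S_map _ (fun w => s_ i :: w)) (Dmat_f ha hb i0) !S_if ?S_1 ?S_2 ?S_nil. 
case: (eqVneq k a) => [_|ka]; first by rewrite sum_if1.
case: (eqVneq k b) => [_|kb]; first by rewrite sum_if2 addrA.
by rewrite sum_if1'.
Qed.

Lemma rowSi (F : word -> T) (B : gmat n) k l :
  Sv F (gmm n (phi_letter n (Sg i true)) B k l) =
  if k == a then Sv (fun w => F (Sg i true :: w)) (B a l)
      - Sv (fun w => F (ginv_ i :: Sg i true :: w)) (B a l)
      + Sv (fun w => F (Sg i true :: w)) (B b l)
  else if k == b then Sv (fun w => F (ginv_ i :: Sg i true :: w)) (B a l)
  else Sv (fun w => F (Sg i true :: w)) (B k l).
Proof.
rewrite S_gmm /=.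
under eq_bigr => m _ do rewrite (S_map _ (fun w => w ++ [:: Sg i true])) (Dmat_t ha hb i0) !S_if ?S_1 ?S_2 ?S_nil.
case: (eqVneq k a) => [_|ka]; first by rewrite sum_if2.
case: (eqVneq k b) => [_|kb]; first by rewrite sum_if1.
by rewrite sum_if1'.
Qed.
End Rows.

Local Open Scope ring_scope.

Section Geq.
Variables (T : comNzRingType) (n : nat).
Definition invF (F : word -> T) := forall u v, eqG n u v -> F u = F v.
Definition geqv (A B : gmat n) :=
  forall F, invF F -> forall k l, Sv F (A k l) = Sv F (B k l).

Lemma geq_ctx u v a b : geqv (phi n u) (phi n v) -> geqv (phi n (a ++ u ++ b)) (phi n (a ++ v ++ b)).
Proof.
move=> h F hF k l; rewrite (phi_cat F a (u ++ b)) (phi_cat F a (v ++ b)).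
apply: eq_bigr => m _; apply: S_ext => w.
rewrite (phi_cat _ u b) (phi_cat _ v b); apply: eq_bigr => m2 _; apply: h => u1 u2 e.
apply: S_ext => w2; apply: hF; apply: cong_l; exact: cong_r.
Qed.

Lemma eqB_geq :
  (forall u v, braid_rel n u v -> geqv (phi n u) (phi n v)) ->
  (forall i b, (0 < i <= n.-1)%N -> geqv (phi n [:: Sg i b; Sg i (~~ b)]) (phi n [::])) ->
  forall u v, eqB n u v -> geqv (phi n u) (phi n v).
Proof.
move=> Hr Hf u0 v0 H; induction H.
- by [].
- by move=> F hF k l; rewrite (IHcong F hF).
- by move=> F hF k l; rewrite (IHcong1 F hF) (IHcong2 F hF).
- exact: geq_ctx (Hr _ _ H).
- case: x H => [i c|i c] /= /andP[hi hs] //.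
  exact: (geq_ctx a b (Hf i c hi)).
Qed.

Lemma eqG_rw a b u v w : sd_rel n u v -> eqG n (a ++ v ++ b) w -> eqG n (a ++ u ++ b) w.
Proof. by move=> h; apply: cg_trans; apply: cg_rel. Qed.
Lemma eqG_rwr a b u v w : sd_rel n v u -> eqG n (a ++ v ++ b) w -> eqG n (a ++ u ++ b) w.
Proof. by move=> h; apply: cg_trans; apply: cg_sym; apply: cg_rel. Qed.
Lemma eqG_fr a b x w : wf_letter n x -> eqG n (a ++ b) w -> eqG n (a ++ [:: x; linv x] ++ b) w.
Proof. by move=> h; apply: cg_trans; apply: cg_free. Qed.
Lemma eqG_ins a b x w : wf_letter n x -> eqG n (a ++ [:: x; linv x] ++ b) w -> eqG n (a ++ b) w.
Proof. by move=> h; apply: cg_trans; apply: cg_sym; apply: cg_free. Qed.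
Lemma eqG_br a b u v w : braid_rel n u v -> eqG n (a ++ v ++ b) w -> eqG n (a ++ u ++ b) w.
Proof. by move=> h; apply: eqG_rw; apply: sd_braid. Qed.
Lemma eqG_refl u : eqG n u u.
Proof. exact: cg_refl. Qed.

End Geq.
Arguments eqG_rw {n} a b {u v w}.
Arguments eqG_rwr {n} a b {u v w}.
Arguments eqG_fr {n} a b {x w}.
Arguments eqG_ins {n} a b x {w}.
Arguments eqG_br {n} a b {u v w}.


Lemma phi2 n x y : phi n [:: x; y] = gmm n (phi_letter n x) (gmm n (phi_letter n y) (gone n)).
Proof. by []. Qed.
Lemma phi3 n x y z : phi n [:: x; y; z] =
  gmm n (phi_letter n x) (gmm n (phi_letter n y) (gmm n (phi_letter n z) (gone n))).
Proof. by []. Qed.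
Lemma phi0 n : phi n [::] = gone n. Proof. by []. Qed.

Section Free.
Variables (T : comNzRingType) (n i : nat) (a b : 'I_n).
Hypotheses (ha : val a = i.-1) (hb : val b = i) (hi : (0 < i <= n.-1)%N).

Lemma free1 : geqv T (phi n [:: s_ i; Sg i true]) (phi n [::]).
Proof.
have i0 : (0 < i)%N by case/andP: hi.
move=> F hF k l; rewrite phi2 phi0 (rowS ha hb i0) !(rowSi ha hb i0) !S_gone /=.
have e1 : F [:: s_ i; Sg i true] = F [::].
  by apply: hF; apply: (eqG_fr [::] [::]) => //; exact: eqG_refl.
have e2 : F [:: s_ i; g_ i; ginv_ i; Sg i true] = F [::].
  apply: hF; apply: (eqG_fr [:: s_ i] [:: Sg i true]) => /=; first by lia.
  by apply: (eqG_fr [::] [::]) => //; exact: eqG_refl.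
rewrite e1 e2.
case: (eqVneq k a) => [->|ka]; [|case: (eqVneq k b) => [->|kb]];
  rewrite ?eqxx ?(nab ha hb i0) ?(nba ha hb i0) /=.
- by case: (a == l).
- by case: (a == l); case: (b == l); ring.
- by [].
Qed.
End Free.

Lemma eqG_sym n u v : eqG n u v -> eqG n v u.
Proof. exact: cg_sym. Qed.

Section Free2.
Variables (T : comNzRingType) (n i : nat) (a b : 'I_n).
Hypotheses (ha : val a = i.-1) (hb : val b = i) (hi : (0 < i <= n.-1)%N).

Lemma free2 : geqv T (phi n [:: Sg i true; s_ i]) (phi n [::]).
Proof.
have i0 : (0 < i)%N by case/andP: hi.
move=> F hF k l; rewrite phi2 phi0 (rowSi ha hb i0) !(rowS ha hb i0) !S_gone /=.
have e1 : F [:: Sg i true; s_ i] = F [::].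
  by apply: hF; apply: (eqG_fr [::] [::]) => //; exact: eqG_refl.
have e2 : F [:: ginv_ i; Sg i true; s_ i; g_ i] = F [::].
  apply: hF; apply: (eqG_fr [:: ginv_ i] [:: g_ i]) => //=.
  by apply: (eqG_fr [::] [::]) => /=; [lia | exact: eqG_refl].
have e3 : F [:: Sg i true; s_ i; g_ i] = F [:: g_ i].
  by apply: hF; apply: (eqG_fr [::] [:: g_ i]) => //; exact: eqG_refl.
rewrite e1 e2 e3.
case: (eqVneq k a) => [->|ka]; [|case: (eqVneq k b) => [->|kb]];
  rewrite ?eqxx ?(nab ha hb i0) ?(nba ha hb i0) /=.
- by case: (a == l); case: (b == l); ring.
- by case: (a == l); case: (b == l); ring.
- by [].
Qed.
End Free2.

Lemma ordF n (x y : 'I_n) : val x <> val y -> (x == y) = false.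
Proof. by move=> h; apply/negbTE; rewrite -val_eqE; apply/eqP. Qed.

Section Far.
Variables (T : comNzRingType) (n i j : nat) (ai bi aj bj : 'I_n).
Hypotheses (hai : val ai = i.-1) (hbi : val bi = i) (haj : val aj = j.-1) (hbj : val bj = j).
Hypotheses (hi : (0 < i <= n.-1)%N) (hj : (0 < j <= n.-1)%N) (hij : (i.+1 < j)%N).

Lemma far : geqv T (phi n [:: s_ i; s_ j]) (phi n [:: s_ j; s_ i]).
Proof.
have i0 : (0 < i)%N by case/andP: hi.
have j0 : (0 < j)%N by case/andP: hj.
have hf : (i.+1 < j)%N || (j.+1 < i)%N by rewrite hij.
have d1 : (ai == aj) = false by apply: ordF; lia.
have d2 : (ai == bj) = false by apply: ordF; lia.
have d3 : (bi == aj) = false by apply: ordF; lia.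
have d4 : (bi == bj) = false by apply: ordF; lia.
have d5 : (aj == ai) = false by apply: ordF; lia.
have d6 : (bj == ai) = false by apply: ordF; lia.
have d7 : (aj == bi) = false by apply: ordF; lia.
have d8 : (bj == bi) = false by apply: ordF; lia.
move=> F hF k l.
have e1 : F [:: s_ i; s_ j] = F [:: s_ j; s_ i].
  by apply: hF; apply: (eqG_br [::] [::] (br_far _ _ _ hi hj hf)); exact: eqG_refl.
have e2 : F [:: s_ i; g_ i; s_ j] = F [:: s_ j; s_ i; g_ i].
  apply: hF; apply: (eqG_rw [:: s_ i] [::] (sd_3 _ _ _ hj _ _ _)) => /=; first by lia.
  - by apply/eqP; lia.
  - by apply/eqP; lia.
  by apply: (eqG_br [::] [:: g_ i] (br_far _ _ _ hi hj hf)); exact: eqG_refl.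
have e3 : F [:: s_ i; s_ j; g_ j] = F [:: s_ j; g_ j; s_ i].
  apply: hF; apply: (eqG_br [::] [:: g_ j] (br_far _ _ _ hi hj hf)) => /=.
  apply: eqG_sym; apply: (eqG_rw [:: s_ j] [::] (sd_3 _ _ _ hi _ _ _)) => /=; first by lia.
  - by apply/eqP; lia.
  - by apply/eqP; lia.
  exact: eqG_refl.
case: (eqVneq k ai) => [->|kai]; [|case: (eqVneq k bi) => [->|kbi]; [|
  case: (eqVneq k aj) => [->|kaj]; [|case: (eqVneq k bj) => [->|kbj]]]];
  rewrite !phi2; do 2 rewrite ?(rowS hai hbi i0) ?(rowS haj hbj j0); rewrite !S_gone /=;
  rewrite ?eqxx ?d1 ?d2 ?d3 ?d4 ?d5 ?d6 ?d7 ?d8 ?(nab hai hbi i0) ?(nba hai hbi i0)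
    ?(nab haj hbj j0) ?(nba haj hbj j0) /=;
  try rewrite (negbTE kai); try rewrite (negbTE kbi); try rewrite (negbTE kaj); try rewrite (negbTE kbj); rewrite ?e1 ?e2 ?e3.
all: try ring.
Qed.
End Far.

Local Open Scope ring_scope.

Section AdjW.
Variables (n i : nat).
Hypotheses (hi : (0 < i <= n.-1)%N) (hj : (0 < i.+1 <= n.-1)%N).
Let j := i.+1.
Let hk : (0 < j.+1 <= n)%N. Proof. rewrite /j; lia. Qed.
Let n1 : j.+1 != i. Proof. rewrite /j; apply/eqP; lia. Qed.
Let n2 : j.+1 != i.+1. Proof. rewrite /j; apply/eqP; lia. Qed.
Let hgj : wf_letter n (ginv_ j). Proof. rewrite /= /j; lia. Qed.
Let hadj : (j == i.+1) || (i == j.+1). Proof. by rewrite /j eqxx. Qed.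

Lemma wE4 : eqG n [:: s_ i; s_ j; g_ j; s_ i] [:: s_ j; g_ j; s_ i; s_ j].
Proof.
apply: (eqG_rwr [:: s_ i] [:: s_ i] (sd_1 _ _ hj)) => /=.
apply: (eqG_rwr [::] [:: s_ j; s_ i] (sd_3 _ _ _ hi hk n1 n2)) => /=.
apply: (eqG_br [:: g_ j.+1] [::] (br_adj _ _ _ hi hj hadj)) => /=.
apply: (eqG_rw [::] [:: s_ i; s_ j] (sd_1 _ _ hj)) => /=.
exact: eqG_refl.
Qed.

Lemma wE3 : eqG n [:: s_ i; s_ j; s_ i; g_ i] [:: s_ j; g_ j; s_ i; s_ j].
Proof.
apply: (eqG_rwr [:: s_ i; s_ j] [::] (sd_1 _ _ hi)) => /=.
exact: wE4.
Qed.

Definition W := [:: g_ j; g_ j.+1; s_ j; s_ i; s_ j].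

Lemma wL : eqG n [:: s_ i; g_ i; s_ j; g_ j; s_ i] W.
Proof.
apply: (eqG_rwr [::] [:: s_ j; g_ j; s_ i] (sd_1 _ _ hi)) => /=.
apply: (eqG_rwr [:: g_ j; s_ i] [:: s_ i] (sd_1 _ _ hj)) => /=.
apply: (eqG_rwr [:: g_ j] [:: s_ j; s_ i] (sd_3 _ _ _ hi hk n1 n2)) => /=.
apply: (eqG_br [:: g_ j; g_ j.+1] [::] (br_adj _ _ _ hi hj hadj)) => /=.
exact: eqG_refl.
Qed.

Lemma wR5 : eqG n [:: s_ j; g_ j; s_ i; s_ j; g_ j] W.
Proof.
apply: (eqG_rwr [::] [:: s_ i; s_ j; g_ j] (sd_1 _ _ hj)) => /=.
apply: (eqG_rwr [:: g_ j.+1; s_ j; s_ i] [::] (sd_1 _ _ hj)) => /=.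
apply: (eqG_rwr [:: g_ j.+1; s_ j] [:: s_ j] (sd_3 _ _ _ hi hk n1 n2)) => /=.
apply: (eqG_rw [::] [:: g_ j.+1; s_ i; s_ j] (sd_1 _ _ hj)) => /=.
apply: (eqG_ins [:: s_ j; g_ j; g_ j.+1] [:: s_ i; s_ j] (ginv_ j) hgj) => /=.
apply: (eqG_rwr [::] [:: g_ j; s_ i; s_ j] (sd_2 _ _ hj)) => /=.
apply: (eqG_rwr [:: g_ j] [:: s_ i; s_ j] (sd_1 _ _ hj)) => /=.
exact: eqG_refl.
Qed.

Lemma wE5 : eqG n [:: s_ i; g_ i; s_ j; g_ j; s_ i] [:: s_ j; g_ j; s_ i; s_ j; g_ j].
Proof. apply: cg_trans wL _; apply: eqG_sym; exact: wR5. Qed.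

Lemma wE2 : eqG n [:: s_ i; g_ i; s_ j; g_ j; s_ i] [:: s_ j; s_ i; g_ i; s_ j; g_ j].
Proof.
apply: cg_trans wE5 _; apply: eqG_sym.
apply: (eqG_rwr [:: s_ j] [:: s_ j; g_ j] (sd_1 _ _ hi)) => /=.
exact: eqG_refl.
Qed.

Lemma wE1 : eqG n [:: s_ i; s_ j; s_ i] [:: s_ j; s_ i; s_ j].
Proof. apply: (eqG_br [::] [::] (br_adj _ _ _ hi hj hadj)); exact: eqG_refl. Qed.
End AdjW.

Section Adj.
Variables (T : comNzRingType) (n i : nat) (a b c : 'I_n).
Hypotheses (ha : val a = i.-1) (hb : val b = i) (hc : val c = i.+1).
Hypotheses (hi : (0 < i <= n.-1)%N) (hj : (0 < i.+1 <= n.-1)%N).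

Lemma adj : geqv T (phi n [:: s_ i; s_ i.+1; s_ i]) (phi n [:: s_ i.+1; s_ i; s_ i.+1]).
Proof.
have i0 : (0 < i)%N by case/andP: hi.
have j0 : (0 < i.+1)%N by [].
have rI := @rowS T n i a b ha hb i0.
have rJ := @rowS T n i.+1 b c hb hc j0.
have d1 : (a == c) = false by apply: ordF; lia.
have d2 : (c == a) = false by apply: ordF; lia.
have d3 : (b == c) = false by apply: ordF; lia.
have d4 : (c == b) = false by apply: ordF; lia.
have d5 : (a == b) = false by apply: ordF; lia.
have d6 : (b == a) = false by apply: ordF; lia.
move=> F hF k l.
have e1 := hF _ _ (wE1 hi hj).
have e2 := hF _ _ (wE2 hi hj).
have e3 := hF _ _ (wE3 hi hj).
have e4 := hF _ _ (wE4 hi hj).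
have e5 := hF _ _ (wE5 hi hj).
have e6 : F [:: s_ i.+1; s_ i; g_ i; s_ i.+1; g_ i.+1] = F [:: s_ i.+1; g_ i.+1; s_ i; s_ i.+1; g_ i.+1].
  by rewrite -e2 e5.
case: (eqVneq k a) => [->|ka]; [|case: (eqVneq k b) => [->|kb]; [|
  case: (eqVneq k c) => [->|kc]]];
  rewrite !phi3; do 3 rewrite ?rI ?rJ; rewrite !S_gone /=;
  rewrite ?eqxx ?d1 ?d2 ?d3 ?d4 ?d5 ?d6 /=;
  try rewrite (negbTE ka); try rewrite (negbTE kb); try rewrite (negbTE kc);
  rewrite ?e1 ?e2 ?e3 ?e4 ?e5 ?e6.
all: try ring.
Qed.
End Adj.

Local Open Scope ring_scope.

Lemma geqv_sym T n (A B : gmat n) : geqv T A B -> geqv T B A.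
Proof. by move=> h F hF k l; rewrite h. Qed.

Lemma braid_geqv T n u v : braid_rel n u v -> geqv T (phi n u) (phi n v).
Proof.
case.
- move=> i j hi hj h.
  have oi1 : (i.-1 < n)%N by lia.
  have oi : (i < n)%N by lia.
  have oj1 : (j.-1 < n)%N by lia.
  have oj : (j < n)%N by lia.
  case/orP: h => h.
  + exact: (@far T n i j (Ordinal oi1) (Ordinal oi) (Ordinal oj1) (Ordinal oj)).
  + apply: geqv_sym.
    exact: (@far T n j i (Ordinal oj1) (Ordinal oj) (Ordinal oi1) (Ordinal oi)).
- move=> i j hi hj h.
  case/orP: h => /eqP E; subst.
  + have oi1 : (i.-1 < n)%N by lia.
    have oi : (i < n)%N by lia.
    have oj : (i.+1 < n)%N by lia.
    exact: (@adj T n i (Ordinal oi1) (Ordinal oi) (Ordinal oj)).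
  + have oi1 : (j.-1 < n)%N by lia.
    have oi : (j < n)%N by lia.
    have oj : (j.+1 < n)%N by lia.
    apply: geqv_sym.
    exact: (@adj T n j (Ordinal oi1) (Ordinal oi) (Ordinal oj)).
Qed.

Lemma free_geqv T n i b : (0 < i <= n.-1)%N -> geqv T (phi n [:: Sg i b; Sg i (~~ b)]) (phi n [::]).
Proof.
move=> hi.
have oi1 : (i.-1 < n)%N by lia.
have oi : (i < n)%N by lia.
case: b.
- exact: (@free2 T n i (Ordinal oi1) (Ordinal oi)).
- exact: (@free1 T n i (Ordinal oi1) (Ordinal oi)).
Qed.

Lemma eqB_phi T n u v : eqB n u v -> geqv T (phi n u) (phi n v).
Proof.
apply: eqB_geq; first exact: braid_geqv.
exact: free_geqv.
Qed.

Local Open Scope ring_scope.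

Section Final.
Variables (C : comNzRingType) (n d : nat) (rt : word -> 'M[C]_d).
Hypothesis (Hr : is_rep_FP n d rt).

Definition Fe w := if pure n w then rt w else 0.

Lemma ext_S x : ext n d rt x = Sv Fe x.
Proof.
rewrite /ext /Sv big_mkcond; apply: eq_bigr => p _; rewrite /Fe.
by case: ifP => _; rewrite ?scaler_int ?mul0rz.
Qed.

Definition Pc (f : nat -> nat) (c : word) :=
  braid_word n c /\ forall k, (0 < k <= n)%N -> f (perm_of c k) = k.
Definition E1 f w := match pselect (exists c, Pc f c) with
  | left h => rt (w ++ sval (cid h)) | right _ => 0 end.
Definition E w := if wf n w then (if pure n w then rt w else E1 (perm_of w) w) else 0.

Lemma E_inv u v : eqG n u v -> E u = E v.
Proof.
case: Hr => [_ [hm hc]] he.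
rewrite /E (eqG_wf he); case hw: (wf n v) => //.
have hwu : wf n u by rewrite (eqG_wf he).
have hpe := pure_ext n (eqG_perm he).
rewrite hpe; case hp : (pure n v).
- by apply: hc => //; rewrite hpe.
- have -> : perm_of u = perm_of v by apply: funext => k; exact: eqG_perm he k.
  rewrite /E1; case: pselect => // h.
  case: (svalP (cid h)) => /andP[hcw hcs] hcp.
  apply: hc.
  + by rewrite wf_cat hwu.
  + by rewrite wf_cat hw.
  + apply/allP => k; rewrite mem_iota => hk.
    by rewrite perm_of_cat (eqG_perm he) hcp //; lia.
  + apply/allP => k; rewrite mem_iota => hk.
    by rewrite perm_of_cat hcp //; lia.
  + exact: cong_r.
Qed.

Lemma mxE_z (A : 'M[C]_d) z r s : (A *~ z) r s = A r s *~ z.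
Proof.
case: z => m; first by rewrite -!pmulrn mulmxnE.
by rewrite !NegzE !mulrNz mxE -!pmulrn mulmxnE.
Qed.

Lemma S_entry (F : word -> 'M[C]_d) x r s : Sv F x r s = Sv (fun w => F w r s) x.
Proof. by rewrite /Sv summxE; apply: eq_bigr => p _; rewrite mxE_z. Qed.

Lemma phi_pw u k l p : braid_word n u -> pure n u -> p \in phi n u k l ->
  wf n p.2 /\ pure n p.2.
Proof.
move=> /andP[hw _] hp hin; case: (phi_words hin) => hperm hwf.
by split; [exact: hwf | rewrite (pure_ext n hperm)].
Qed.

Lemma Fe_E u k l : braid_word n u -> pure n u -> Sv Fe (phi n u k l) = Sv E (phi n u k l).
Proof.
move=> hb hp; rewrite /Sv; apply: eq_big_seq => p hin.
by case: (phi_pw hb hp hin) => hw hq; rewrite /Fe /E hw hq.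
Qed.

Lemma pure_cat u v : wf n u -> wf n v -> pure n u -> pure n v -> pure n (u ++ v).
Proof.
move=> hu hv pu pv; apply/allP => k _.
by rewrite perm_of_cat (pure_perm hv pv) (pure_perm hu pu).
Qed.

Lemma mulmxz (A B : 'M[C]_d) z : A *m (B *~ z) = (A *m B) *~ z.
Proof. by rewrite -!scaler_int scalemxAr. Qed.
Lemma mulzmx (A B : 'M[C]_d) z : (A *~ z) *m B = (A *m B) *~ z.
Proof. by rewrite -!scaler_int scalemxAl. Qed.

Lemma pure_nil : pure n [::].
Proof. by apply/allP. Qed.

Lemma rp_one : rho_plus n d rt [::] = 1%:M.
Proof.
case: Hr => [h1 _].
rewrite -(mxdiagZ (p_ := fun _ : 'I_n => d)) /mxdiag /rho_plus /=.
apply: eq_mxblock => k l; rewrite /gone; case: eqP => _.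
- by rewrite conform_mx_id /ext big_cons big_nil /= pure_nil h1 addr0 scaler_int mulr1z.
- by rewrite /ext big_nil.
Qed.

Lemma rp_mul u v : braid_word n u -> braid_word n v -> pure n u -> pure n v ->
  rho_plus n d rt (u ++ v) = rho_plus n d rt u *m rho_plus n d rt v.
Proof.
case: Hr => [_ [hm _]] hu hv pu pv.
rewrite /rho_plus mul_mxblock; apply: eq_mxblock => k l.
rewrite ext_S phi_cat; apply: eq_bigr => m _.
rewrite !ext_S /Sv mulmx_suml; apply: eq_big_seq => p hp.
case: (phi_pw hu pu hp) => hpw hpp.
rewrite mulzmx mulmx_sumr; congr (_ *~ _); apply: eq_big_seq => q hq.
case: (phi_pw hv pv hq) => hqw hqp.
by rewrite mulmxz /Fe hpp hqp pure_cat // hm.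
Qed.

Lemma rp_inv u v : braid_word n u -> braid_word n v -> pure n u -> pure n v ->
  eqB n u v -> rho_plus n d rt u = rho_plus n d rt v.
Proof.
move=> hu hv pu pv he; rewrite /rho_plus; apply: eq_mxblock => k l.
rewrite !ext_S (Fe_E _ _ hu pu) (Fe_E _ _ hv pv); apply/matrixP => r s.
rewrite !S_entry; apply: (@eqB_phi C n u v he (fun w => E w r s)) => u1 v1 e.
by rewrite (E_inv e).
Qed.

Lemma partiii : is_rep_P n (\sum_(k < n) d) (rho_plus n d rt).
Proof.
split; first exact: rp_one.
split; first exact: rp_mul.
exact: rp_inv.
Qed.
End Final.


Local Open Scope ring_scope.
Local Open Scope complex_scope.

Theorem theorem4p1 (R : realType) (n d : nat) (rho : word -> 'M[R[i]]_d)
  (t : nat -> R[i]) :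
  (2 <= n)%N -> is_rep_FP n d rho ->
  (forall i, (1 <= i <= n)%N -> t i != 0) ->
  (exists rho_t, twisted n d rho t rho_t) /\
  (forall b, braid_word n b -> pure n b ->
     forall k l : 'I_n, in_ZFP n (phi n b k l)) /\
  (forall rho_t, twisted n d rho t rho_t ->
     is_rep_P n (\sum_(k < n) d) (rho_plus n d rho_t)).
Proof.
move=> hn hrho tnz.
split; first by exists (rhot n rho t); exact: (rhot_twisted tnz hrho).
split; first by move=> b _ hp k l; exact: partii.
by move=> rho_t [hrep _]; exact: partiii.
Qed.
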